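(* Let $\omega\colon\mathbf Z_+\to(0,+\infty)$ be a positive weight and let $T\colon\mathbf Z_+\to\mathbf Z_+$ be the modified Collatz map ($T(n)=n/2$ if $n$ is even, $T(n)=(3n+1)/2$ if $n$ is odd). Let $\mathcal X_\omega$ be the Hilbert space of holomorphic functions $f(z)=\sum_{n\ge 3}c_nz^n$ on the unit disk with $\|f\|_\omega^2=\sum_{n\ge3}|c_n|^2/\omega(n)<\infty$, and let $\mathcal T$ be defined on $\mathcal X_\omega$ by \[\mathcal T\sum_{n\ge3}c_nz^n=\sum_{j\ge 3,\ T(j)\ge 3}c_jz^{T(j)}\] (so the coefficient of $z^k$, $k\ge3$, in $\mathcal Tf$ is $\sum_{j\ge3,\,T(j)=k}c_j$). Then $\mathcal T$ is a bounded operator on $\mathcal X_\omega$ if and only if the three sequences $(\omega(6m)/\omega(3m))_{m\ge1}$, $(\omega(6m+2)/\omega(3m+1))_{m\ge1}$ and $((\omega(6m+4)+\omega(2m+1))/\omega(3m+2))_{m\ge1}$ are bounded. In this case \[\|\mathcal T\|_\omega^2=\max\Big\{\sup_{m\ge1}\tfrac{\omega(6m)}{\omega(3m)},\ \sup_{m\ge1}\tfrac{\omega(6m+2)}{\omega(3m+1)},\ \sup_{m\ge1}\tfrac{\omega(6m+4)+\omega(2m+1)}{\omega(3m+2)}\Big\},\] and moreover for every $n\ge0$, \[\|\mathcal T^n\|_\omega^2=\sup_{k\ge3}\sum_{j\ge3,\ T^n(j)=k}\frac{\omega(j)}{\omega(k)}.\] In particular, for $\omega=\omega_0$ with $\omega_0(n)=(n+1)/\pi$,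 $\mathcal T$ is bounded on $\mathcal X_{\omega_0}$ and $\|\mathcal T\|^2=8/3$.
   Context: $\mathcal X_\omega$ is the quotient of the weighted Bergman space $\mathcal B^2_\omega=\{\sum_{n\ge0}c_nz^n:\sum|c_n|^2/\omega(n)<\infty\}$ by $\mathrm{span}[1,z,z^2]$, identified with functions $\sum_{n\ge3}c_nz^n$; its inner product is $\langle f,g\rangle=\sum_{n\ge3}c_n(f)\overline{c_n(g)}/\omega(n)$. For $\omega_0(n)=(n+1)/\pi$, $\mathcal B^2_{\omega_0}$ is the classical Bergman space. *)

(* Defs.v *)
From HB Require Import structures.
From mathcomp Require Import all_boot all_order all_algebra.
From mathcomp Require Import all_classical all_reals all_analysis.
From mathcomp Require Import complex.
Set Implicit Arguments. Unset Strict Implicit. Unset Printing Implicit Defensive.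
Import Order.TTheory GRing.Theory Num.Theory.
Local Open Scope ring_scope.
Local Open Scope classical_set_scope.

Definition collatz (n : nat) : nat :=
  if odd n then (3 * n + 1)./2 else n./2.

(* An element of X_omega is represented by its coefficient sequence c : nat -> R[i],
   c n being the coefficient of z^n. *)

Definition normsq (R : realType) (w : nat -> R) (c : nat -> R[i]) : \bar R :=
  (\sum_(3 <= n <oo) ((Normc.normc (c n)) ^+ 2 / w n)%:E)%E.

Definition inX (R : realType) (w : nat -> R) (c : nat -> R[i]) : Prop :=
  (forall n, (n < 3)%N -> c n = 0) /\ (normsq w c < +oo)%E.

(* Since collatz j >= j/2, such j satisfy j <= 2k, so the sum is finite. *)
Definition Top (R : realType) (c : nat -> R[i]) : nat -> R[i] :=
  fun k => if (3 <= k)%N then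
             \sum_(j < (2 * k).+1 | (3 <= j)%N && (collatz j == k)) c j
           else 0.

Definition bounded_op (R : realType) (w : nat -> R)
    (A : (nat -> R[i]) -> (nat -> R[i])) : Prop :=
  (forall c, inX w c -> inX w (A c)) /\
  exists M : R, forall c, inX w c -> (normsq w (A c) <= M%:E * normsq w c)%E.

(* squared operator norm ||A||_omega^2 = inf { M >= 0 | ||A f||^2 <= M ||f||^2 for all f };
   equals +oo when A is unbounded *)
Definition opnormsq (R : realType) (w : nat -> R)
    (A : (nat -> R[i]) -> (nat -> R[i])) : \bar R :=
  ereal_inf [set M%:E | M in [set M : R | 0 <= M /\
     forall c, inX w c -> (normsq w (A c) <= M%:E * normsq w c)%E]].

Definition sup_m1 (R : realType) (u : nat -> R) : \bar R :=
  ereal_sup [set (u m)%:E | m in [set m : nat | (1 <= m)%N]].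

Definition bounded_seq1 (R : realType) (u : nat -> R) : Prop :=
  exists B : R, forall m, (1 <= m)%N -> `|u m| <= B.

Definition seq1 (R : realType) (w : nat -> R) (m : nat) : R :=
  w (6 * m)%N / w (3 * m)%N.
Definition seq2 (R : realType) (w : nat -> R) (m : nat) : R :=
  w (6 * m + 2)%N / w (3 * m + 1)%N.
Definition seq3 (R : realType) (w : nat -> R) (m : nat) : R :=
  (w (6 * m + 4)%N + w (2 * m + 1)%N) / w (3 * m + 2)%N.

(* sup_{k>=3} sum_{j>=3, T^n(j)=k} omega(j)/omega(k);
   T^n(j) = k forces j <= 2^n k, so the sum is finite. *)
Definition iter_sup (R : realType) (w : nat -> R) (n : nat) : \bar R :=
  ereal_sup [set (\sum_(j < (2 ^ n * k).+1 | (3 <= j)%N && (iter n collatz j == k))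
                     w j / w k)%:E
            | k in [set k : nat | (3 <= k)%N]].

Definition omega0 (R : realType) (n : nat) : R := (n.+1)%:R / pi.

(* Main.v *)
Set Warnings "-all".
Require Import Defs.
From HB Require Import structures.
From mathcomp Require Import all_boot all_order all_algebra.
From mathcomp Require Import all_classical all_reals all_analysis.
From mathcomp Require Import complex.
From mathcomp Require Import zify ring lra.
Import Order.TTheory GRing.Theory Num.Theory.
Set Implicit Arguments. Unset Strict Implicit. Unset Printing Implicit Defensive.
Local Open Scope ring_scope.
Definition Agen (R : realType) (phi N : nat -> nat) (c : nat -> R[i]) : nat -> R[i] :=
  fun k => if (3 <= k)%N then \sum_(j < N k | (3 <= j)%N && (phi j == k)) c j else 0.

Definition sk (R : realType) (w : nat -> R) (phi N : nat -> nat) (k : nat) : R :=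
  \sum_(j < N k | (3 <= j)%N && (phi j == k)) w j / w k.

Definition Sgen (R : realType) (w : nat -> R) (phi N : nat -> nat) : \bar R :=
  ereal_sup [set (sk w phi N k)%:E | k in [set k : nat | (3 <= k)%N]].

Lemma series_le (R : realType) (f : nat -> R) (B : \bar R) :
  (forall n, 0 <= f n) ->
  (forall m, (\sum_(3 <= n < m) (f n)%:E <= B)%E) ->
  (\sum_(3 <= n <oo) (f n)%:E <= B)%E.
Proof.
move=> f0 H.
have nd : nondecreasing_seq (fun m => (\sum_(3 <= n < m) (f n)%:E)%E).
  by apply: ereal_nondecreasing_series => n _ _; rewrite lee_fin.
rewrite (cvg_lim _ (ereal_nondecreasing_cvgn nd)) //.
by apply: ge_ereal_sup => x [m _ <-]; exact: H.
Qed.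

Lemma series_ge (R : realType) (f : nat -> R) m :
  (forall n, 0 <= f n) ->
  (\sum_(3 <= n < m) (f n)%:E <= \sum_(3 <= n <oo) (f n)%:E)%E.
Proof. by move=> f0; apply: nneseries_lim_ge => n _ _; rewrite lee_fin. Qed.

Lemma normsq_ge0 (R : realType) (w : nat -> R) c : (forall n, 0 < w n) -> (0 <= normsq w c)%E.
Proof.
by move=> wp; apply: nneseries_ge0 => n _ _; rewrite lee_fin divr_ge0 ?sqr_ge0 ?ltW.
Qed.

Lemma widen_sum (V : zmodType) (P : pred nat) (F : nat -> V) N M :
  (forall i, P i -> (i < N)%N) -> (N <= M)%N ->
  \sum_(i < N | P i) F i = \sum_(i < M | P i) F i.
Proof.
move=> HP NM; rewrite (big_ord_widen_cond M) //; apply: eq_bigl => i.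
by case Pi: (P i) => //=; rewrite HP.
Qed.

Lemma sum_mono (R : realType) (P : pred nat) (F : nat -> R) N M :
  (forall i, 0 <= F i) -> (N <= M)%N ->
  \sum_(i < N | P i) F i <= \sum_(i < M | P i) F i.
Proof.
move=> F0 NM; rewrite (big_ord_widen_cond M) //.
rewrite [leRHS](bigID (fun i : 'I_M => (i < N)%N)) /=.
by rewrite lerDl sumr_ge0.
Qed.

Lemma sum_sub (R : realType) (Q : pred nat) (F : nat -> R) m :
  (forall i, 0 <= F i) ->
  \sum_(i < m | Q i) F i <= \sum_(i < m) F i.
Proof.
move=> F0; rewrite [leRHS](bigID (fun i : 'I_m => Q i)) /=.
by rewrite lerDl sumr_ge0.
Qed.

Lemma sum_ind (V : zmodType) (m x : nat) (a : V) :
  \sum_(k < m) (if (k : nat) == x then a else 0) = if (x < m)%N then a else 0.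
Proof.
elim: m => [|m IH]; first by rewrite big_ord0.
rewrite big_ord_recr /= IH.
case: eqP => e; case: ltnP => h1; case: ltnP => h2;
  first [by rewrite ?addr0 ?add0r | exfalso; lia].
Qed.

Lemma sum_one (V : zmodType) n (P : pred nat) (F : nat -> V) x :
  (x < n)%N -> (forall j, P j = (j == x)) -> \sum_(j < n | P j) F j = F x.
Proof.
move=> xn HP; rewrite big_mkcond /=.
rewrite (eq_bigr (fun j : 'I_n => if (j : nat) == x then F x else 0)).
  by rewrite sum_ind xn.
by move=> j _; rewrite HP; case: eqP => // ->.
Qed.

Lemma cauchy_schwarz (R : realType) (n : nat) (P : pred nat) (x w : nat -> R) :
  (forall j, 0 < w j) ->
  (\sum_(j < n | P j) x j) ^+ 2 <=
    (\sum_(j < n | P j) w j) * \sum_(j < n | P j) (x j ^+ 2 / w j).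
Proof.
move=> wp.
have W0 : 0 <= \sum_(j < n | P j) w j by apply: sumr_ge0 => j _; exact: ltW.
have Q0 : 0 <= \sum_(j < n | P j) (x j ^+ 2 / w j).
  by apply: sumr_ge0 => j _; rewrite divr_ge0 ?sqr_ge0 ?ltW.
set X := \sum_(j < n | P j) x j.
set W := \sum_(j < n | P j) w j.
set Q := \sum_(j < n | P j) (x j ^+ 2 / w j).
have [Wpos|Wle] := ltP 0 W.
- have key : 0 <= \sum_(j < n | P j) ((x j * W - X * w j) ^+ 2 / w j).
    by apply: sumr_ge0 => j _; rewrite divr_ge0 ?sqr_ge0 ?ltW.
  have tid : forall j : 'I_n, (x j * W - X * w j) ^+ 2 / w j =
      W ^+ 2 * (x j ^+ 2 / w j) - (2 * W * X) * x j + X ^+ 2 * w j.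
    move=> j; have wj := wp j; field; exact: lt0r_neq0.
  rewrite (eq_bigr _ (fun j _ => tid j)) big_split /= sumrB -!mulr_sumr in key.
  rewrite -/X -/W -/Q in key.
  nra.
- have W00 : W = 0 by apply/eqP; rewrite eq_le Wle W0.
  have Pn : forall j : 'I_n, P j -> False.
    move=> j Pj; have := @psumr_eq0P _ _ (fun i : 'I_n => P i) (fun i : 'I_n => w i) (fun i _ => ltW (wp i)) W00 j Pj.
    by move=> h; have := wp j; rewrite h ltxx.
  have -> : X = 0 by rewrite /X big1 // => j /Pn.
  by rewrite W00 expr0n mul0r.
Qed.

Lemma normc_sum (R : realType) n (P : pred nat) (c : nat -> R[i]) :
  Normc.normc (\sum_(j < n | P j) c j) <= \sum_(j < n | P j) Normc.normc (c j).
Proof.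
apply: (big_ind2 (fun a b => Normc.normc a <= b)).
- by rewrite Normc.normc0.
- move=> a b a' b' Ha Hb; apply: le_trans (le_normcD _ _) _; exact: lerD.
- by [].
Qed.

Lemma normcC (R : realType) (x : R) : 0 <= x -> Normc.normc (x%:C)%C = x.
Proof.
move=> x0; rewrite /Normc.normc /= expr0n /= addr0 sqrtr_sqr ger0_norm //.
Qed.

Lemma double_sum (R : realType) (phi : nat -> nat) (a : nat -> R) m J :
  (forall j, 0 <= a j) ->
  \sum_(3 <= k < m) \sum_(j < J | (3 <= j)%N && (phi j == k)) a j <=
  \sum_(3 <= j < J) a j.
Proof.
move=> a0.
rewrite !big_geq_mkord /=.
apply: (@le_trans _ _ (\sum_(k < m) \sum_(j < J | (3 <= j)%N && (phi j == k)) a j)).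
  have H := @sum_sub R (fun k => (3 <= k)%N) (fun k => \sum_(j < J | (3 <= j)%N && (phi j == k)) a j) m.
  apply: H => k; exact: sumr_ge0.
rewrite (eq_bigr (fun k : 'I_m => \sum_(j < J) (if (3 <= j)%N && (phi j == k) then a j else 0))); last first.
  by move=> k _; rewrite big_mkcond.
rewrite exchange_big /= [leRHS]big_mkcond /=.
apply: ler_sum => j _.
case: (3 <= j)%N => /=.
- under eq_bigr do rewrite eq_sym.
  rewrite sum_ind; case: ifP => //.
- by rewrite big1.
Qed.

Lemma G1 (R : realType) (w : nat -> R) (phi N : nat -> nat) (S : R) (c : nat -> R[i]) :
  (forall n, 0 < w n) ->
  (forall j k, (3 <= j)%N -> phi j = k -> (j < N k)%N) ->
  0 <= S -> (forall k, (3 <= k)%N -> sk w phi N k <= S) ->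
  (normsq w (Agen phi N c) <= S%:E * normsq w c)%E.
Proof.
move=> wp Hf S0 HS.
rewrite /normsq; apply: series_le => [n|m]; first by rewrite divr_ge0 ?sqr_ge0 ?ltW.
pose a := fun j => Normc.normc (c j) ^+ 2 / w j.
have a0 : forall j, 0 <= a j by move=> j; rewrite /a divr_ge0 ?sqr_ge0 ?ltW.
pose J := (\max_(k < m) N k)%N.
apply: (@le_trans _ _ (S%:E * (\sum_(3 <= j < J) (a j)%:E))%E); last first.
  apply: lee_wpmul2l; first by rewrite lee_fin.
  exact: series_ge.
rewrite !sumEFin -EFinM lee_fin.
have step : forall k, (3 <= k < m)%N ->
    Normc.normc (Agen phi N c k) ^+ 2 / w k <=
    S * \sum_(j < J | (3 <= j)%N && (phi j == k)) a j.
  move=> k /andP[k3 km].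
  have NkJ : (N k <= J)%N by exact: (leq_bigmax (Ordinal km)).
  rewrite -(@widen_sum _ (fun j => (3 <= j)%N && (phi j == k)) a (N k) J) //; last first.
    by move=> i /andP[i3 /eqP]; apply: Hf.
  rewrite /Agen k3.
  have h1 := normc_sum (N k) (fun j => (3 <= j)%N && (phi j == k)) c.
  have h2 := cauchy_schwarz (N k) (fun j => (3 <= j)%N && (phi j == k))
     (fun j => Normc.normc (c j)) wp.
  have h3 := HS k k3.
  rewrite /sk -mulr_suml in h3.
  rewrite /= in h1 h2.
  set y := Normc.normc _ in h1 *.
  set z := \sum_(j < N k | _) Normc.normc (c j) in h1 h2.
  set W := \sum_(j < N k | _) w j in h2 h3.
  set Q := \sum_(j < N k | _) _ in h2.
  have -> : \sum_(j < N k | (3 <= j)%N && (phi j == k)) a j = Q by [].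
  have y0 : 0 <= y by rewrite /y /Normc.normc; case: (\sum_(j < N k | _) c j) => ? ?; exact: sqrtr_ge0.
  have wk := wp k.
  have Q0 : 0 <= Q by apply: sumr_ge0 => j _; rewrite divr_ge0 ?sqr_ge0 ?ltW.
  rewrite ler_pdivrMr // in h3.
  rewrite ler_pdivrMr //.
  have hy : y ^+ 2 <= z ^+ 2 by rewrite lerXn2r // ?nnegrE //; exact: le_trans h1.
  nra.
apply: le_trans (ler_sum_nat step) _.
rewrite -mulr_sumr; apply: ler_wpM2l => //.
exact: double_sum.
Qed.

Lemma G2 (R : realType) (w : nat -> R) (phi N : nat -> nat) (M : R) (k : nat) :
  (forall n, 0 < w n) ->
  (forall j k, (3 <= j)%N -> phi j = k -> (j < N k)%N) ->
  0 <= M -> (3 <= k)%N ->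
  (forall c, inX w c -> (normsq w (Agen phi N c) <= M%:E * normsq w c)%E) ->
  sk w phi N k <= M.
Proof.
move=> wp Hf M0 k3 H.
pose P := fun j => (3 <= j)%N && (phi j == k).
pose c := fun j => if P j then ((w j)%:C)%C else 0.
pose W := \sum_(j < N k | P j) w j.
have W0 : 0 <= W by apply: sumr_ge0 => j _; exact: ltW.
have skE : sk w phi N k = W / w k by rewrite /sk -mulr_suml.
have ncE : forall j, Normc.normc (c j) ^+ 2 / w j = if P j then w j else 0.
  move=> j; rewrite /c; case: (P j).
  - by rewrite normcC ?ltW // expr2 mulfK // gt_eqF.
  - by rewrite Normc.normc0 expr0n /= mul0r.
have normc_le : (normsq w c <= W%:E)%E.
  apply: series_le => [n|m]; first by rewrite ncE; case: ifP => // _; exact: ltW.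
  rewrite sumEFin lee_fin big_geq_mkord.
  rewrite (eq_bigr (fun j : 'I_m => if P j then w j else 0)); last by move=> j _; rewrite ncE.
  rewrite -big_mkcondr /=.
  rewrite (eq_bigl (fun j : 'I_m => P j)); last first.
    by move=> j; rewrite /P; case: (3 <= j)%N.
  apply: (@le_trans _ _ (\sum_(j < m + N k | P j) w j)).
    by apply: sum_mono => [j|]; [exact: ltW | lia].
  rewrite /W (@widen_sum _ P w (N k) (m + N k)) //; last by lia.
  by move=> i /andP[i3 /eqP]; apply: Hf.
have inXc : inX w c.
  split.
    by move=> n n3; rewrite /c /P; have -> : (3 <= n)%N = false by lia.
  by apply: le_lt_trans normc_le _; exact: ltry.
have Hc := H c inXc.
have Ak : Agen phi N c k = (W%:C)%C.
  rewrite /Agen k3 /W raddf_sum; apply: eq_bigr => j Pj; rewrite /c; case: ifP => //; by rewrite /P Pj.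
have lowb : ((W ^+ 2 / w k)%:E <= normsq w (Agen phi N c))%E.
  have sg := @series_ge R (fun n => Normc.normc (Agen phi N c n) ^+ 2 / w n) k.+1
    (fun n => divr_ge0 (sqr_ge0 _) (ltW (wp n))).
  apply: (le_trans _ sg).
  rewrite sumEFin lee_fin big_nat_recr //= Ak normcC //.
  by rewrite lerDr sumr_ge0 // => i _; rewrite divr_ge0 ?sqr_ge0 ?ltW.
have : ((W ^+ 2 / w k)%:E <= (M * W)%:E)%E.
  apply: le_trans lowb _; apply: le_trans Hc _.
  by rewrite EFinM; apply: lee_wpmul2l; rewrite ?lee_fin.
rewrite lee_fin skE => h.
have wk := wp k.
have [Wp|Wle] := ltP 0 W.
- rewrite ler_pdivrMr //.
  rewrite ler_pdivrMr // in h.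
  nra.
- have -> : W = 0 by apply/eqP; rewrite eq_le Wle W0.
  by rewrite mul0r.
Qed.

Lemma sk_ge0 (R : realType) (w : nat -> R) phi N k : (forall n, 0 < w n) -> 0 <= sk w phi N k.
Proof. by move=> wp; apply: sumr_ge0 => j _; rewrite divr_ge0 ?ltW. Qed.

Lemma gen_bounded (R : realType) (w : nat -> R) (A : (nat -> R[i]) -> nat -> R[i]) phi N :
  (forall n, 0 < w n) ->
  (forall j k, (3 <= j)%N -> phi j = k -> (j < N k)%N) ->
  (forall c, inX w c -> A c = Agen phi N c) ->
  bounded_op w A <-> exists B : R, forall k, (3 <= k)%N -> sk w phi N k <= B.
Proof.
move=> wp Hf HA; split.
- move=> [_ [M HM]]; exists (Num.max M 0) => k k3.
  apply: (G2 wp Hf _ k3); first by rewrite le_max lexx orbT.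
  move=> c cX; rewrite -HA //; apply: le_trans (HM c cX) _.
  apply: lee_wpmul2r; first exact: normsq_ge0.
  by rewrite lee_fin le_max lexx.
- move=> [B HB]; set B' := Num.max B 0.
  have HB' : forall c, inX w c -> (normsq w (A c) <= B'%:E * normsq w c)%E.
    move=> c cX; rewrite HA //; apply: G1 => //.
      by rewrite /B' le_max lexx orbT.
    by move=> k k3; apply: le_trans (HB k k3) _; rewrite le_max lexx.
  split; last by exists B'.
  move=> c cX; split.
    by move=> n n3; rewrite HA // /Agen; have -> : (3 <= n)%N = false by lia.
  apply: le_lt_trans (HB' c cX) _.
  case: cX => _ fin.
  have fn : normsq w c \is a fin_num by rewrite ge0_fin_numE // normsq_ge0.
  by rewrite -(fineK fn) -EFinM ltry.
Qed.

Lemma gen_opnorm (R : realType) (w : nat -> R) (A : (nat -> R[i]) -> nat -> R[i]) phi N :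
  (forall n, 0 < w n) ->
  (forall j k, (3 <= j)%N -> phi j = k -> (j < N k)%N) ->
  (forall c, inX w c -> A c = Agen phi N c) ->
  opnormsq w A = Sgen w phi N.
Proof.
move=> wp Hf HA.
apply/eqP; rewrite eq_le; apply/andP; split.
- case E : (Sgen w phi N) => [r| |].
  + have ub : forall k, (3 <= k)%N -> sk w phi N k <= r.
      move=> k k3; rewrite -lee_fin -E; apply: ereal_sup_ubound; by exists k.
    have r0 : 0 <= r by apply: le_trans (ub 3%N isT); exact: sk_ge0.
    apply: ereal_inf_lbound; exists r => //; split => // c cX; rewrite HA //.
    exact: G1.
  + exact: leey.
  + exfalso.
    have : ((sk w phi N 3)%:E <= Sgen w phi N)%E by apply: ereal_sup_ubound; exists 3%N.
    by rewrite E.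
- apply: le_ereal_inf_tmp => _ [M [M0 HM] <-].
  apply: ge_ereal_sup => _ [k k3 <-]; rewrite lee_fin.
  apply: (G2 wp Hf M0 k3) => c cX; rewrite -HA //; exact: HM.
Qed.

Lemma collatz_ge (j : nat) : (j <= 2 * collatz j)%N.
Proof. rewrite /collatz; have := odd_double_half j; case: (odd j) => /= h; lia. Qed.

Lemma collatz_small (y : nat) : (3 <= collatz y)%N -> (3 <= y)%N.
Proof. by case: y => [|[|[|y]]]. Qed.

Lemma iter_bound n i : (i <= 2 ^ n * iter n collatz i)%N.
Proof.
elim: n => [|n IH]; first by rewrite expn0 mul1n.
have := collatz_ge (iter n collatz i).
rewrite /= expnS.
set y := iter n collatz i; set t := (2 ^ n)%N; nia.
Qed.

Lemma Hf_iter n : forall j k, (3 <= j)%N -> iter n collatz j = k -> (j < (2 ^ n * k).+1)%N.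
Proof. by move=> j k _ <-; rewrite ltnS; exact: iter_bound. Qed.

Lemma Hf_Top : forall j k, (3 <= j)%N -> collatz j = k -> (j < (2 * k).+1)%N.
Proof. by move=> j k _ <-; rewrite ltnS; exact: collatz_ge. Qed.

Lemma iter_Top (R : realType) n (c : nat -> R[i]) :
  (forall j, (j < 3)%N -> c j = 0) ->
  iter n (@Top R) c = Agen (iter n collatz) (fun k => (2 ^ n * k).+1) c.
Proof.
move=> c0; elim: n => [|n IH].
- apply: funext => k /=; rewrite /Agen /= expn0 mul1n.
  case: ifP => k3.
  + rewrite (@sum_one _ k.+1 (fun j => (3 <= j)%N && (j == k)) c k) //.
    by move=> j; case: eqP => [->|]; rewrite ?k3 ?andbF.
  + by rewrite c0 //; lia.
- rewrite iterS IH; apply: funext => k.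
  rewrite /Top /Agen; case: ifP => k3 //.
  set L := (2 ^ n.+1 * k).+1.
  rewrite (eq_bigr (fun j : 'I_(2 * k).+1 => \sum_(i < L)
      (if (3 <= i)%N && (iter n collatz i == j) then c i else 0))); last first.
    move=> j /andP[j3 /eqP cj]; rewrite j3.
    rewrite (@widen_sum _ (fun i => (3 <= i)%N && (iter n collatz i == j)) c ((2 ^ n * j).+1) L).
    + by rewrite big_mkcond.
    + by move=> i /andP[_ /eqP <-]; rewrite ltnS; exact: iter_bound.
    + rewrite /L expnS; have := collatz_ge j; rewrite cj => h.
      set t := (2 ^ n)%N in h *; nia.
  rewrite exchange_big /= [RHS]big_mkcond; apply: eq_bigr => i _.
  rewrite big_mkcond /=.
  set y := iter n collatz i.
  rewrite (eq_bigr (fun j : 'I_(2 * k).+1 => if (j : nat) == y then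
       (if (3 <= i)%N && (collatz y == k) then c i else 0) else 0)); last first.
    move=> j _; case: (eqVneq (j : nat) y) => [->|ne].
    + rewrite ?eqxx andbT.
      case cy: (collatz y == k); rewrite ?andbF ?andbT //.
      have -> : (3 <= y)%N by apply: collatz_small; move/eqP: cy => ->.
      by [].
    + by rewrite ?andbF; case: ifP.
  rewrite sum_ind; case: (boolP ((3 <= i)%N && (collatz y == k))) => [/andP[_ /eqP cy]|_];
    last by case: ifP.
  by rewrite ifT // ltnS -cy; exact: collatz_ge.
Qed.

Lemma if_two (V : zmodType) (F : nat -> V) a b j : a != b ->
  (if (j == a) || (j == b) then F j else 0) =
  (if j == a then F a else 0) + (if j == b then F b else 0).
Proof.
move=> ab; have [->|ja] := eqVneq j a.
- by rewrite /= (negbTE ab) addr0.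
- have [->|jb] := eqVneq j b; first by rewrite /= add0r.
  by rewrite /= add0r.
Qed.

Lemma skTop1 (R : realType) (w : nat -> R) m : (1 <= m)%N ->
  sk w collatz (fun k => (2 * k).+1) (3 * m) = seq1 w m.
Proof.
move=> m1; rewrite /sk (@sum_one _ _ (fun j => (3 <= j)%N && (collatz j == 3 * m))
   (fun j => w j / w (3 * m)%N) (6 * m)) //; first lia.
move=> j; rewrite /collatz; have := odd_double_half j; case: (odd j) => /= h;
  apply/idP/idP => H; lia.
Qed.

Lemma skTop2 (R : realType) (w : nat -> R) m : (1 <= m)%N ->
  sk w collatz (fun k => (2 * k).+1) (3 * m + 1) = seq2 w m.
Proof.
move=> m1; rewrite /sk (@sum_one _ _ (fun j => (3 <= j)%N && (collatz j == 3 * m + 1))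
   (fun j => w j / w (3 * m + 1)%N) (6 * m + 2)) //; first lia.
move=> j; rewrite /collatz; have := odd_double_half j; case: (odd j) => /= h;
  apply/idP/idP => H; lia.
Qed.

Lemma skTop3 (R : realType) (w : nat -> R) m : (1 <= m)%N ->
  sk w collatz (fun k => (2 * k).+1) (3 * m + 2) = seq3 w m.
Proof.
move=> m1; rewrite /sk /seq3 big_mkcond /=.
have fib : forall j, ((3 <= j)%N && (collatz j == 3 * m + 2)) = (j == 6 * m + 4) || (j == 2 * m + 1).
  move=> j; rewrite /collatz; have := odd_double_half j; case: (odd j) => /= h;
    apply/idP/idP => H; lia.
have ab : (6 * m + 4 != 2 * m + 1)%N by apply/eqP; lia.
rewrite (eq_bigr (fun j : 'I_(2 * (3 * m + 2)).+1 =>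
   (if (j : nat) == (6 * m + 4)%N then w (6 * m + 4)%N / w (3 * m + 2)%N else 0) +
   (if (j : nat) == (2 * m + 1)%N then w (2 * m + 1)%N / w (3 * m + 2)%N else 0))); last first.
  by move=> j _; rewrite fib (@if_two _ (fun j => w j / w (3 * m + 2)%N)).
rewrite big_split /= !sum_ind.
have -> : (6 * m + 4 < (2 * (3 * m + 2)).+1)%N by lia.
have -> : (2 * m + 1 < (2 * (3 * m + 2)).+1)%N by lia.
by rewrite mulrDl.
Qed.

Lemma sk_cases (R : realType) (w : nat -> R) k : (3 <= k)%N ->
  exists2 m, (1 <= m)%N &
    [\/ sk w collatz (fun k => (2 * k).+1) k = seq1 w m,
        sk w collatz (fun k => (2 * k).+1) k = seq2 w m |
        sk w collatz (fun k => (2 * k).+1) k = seq3 w m].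
Proof.
move=> k3; have m1 : (1 <= k %/ 3)%N by lia.
have ek := divn_eq k 3; have lt3 : (k %% 3 < 3)%N by rewrite ltn_mod.
exists (k %/ 3)%N => //.
move: ek lt3; set m := (k %/ 3)%N; case: (k %% 3)%N => [|[|[|r]]] // ek _.
- by apply: Or31; rewrite ek addn0 mulnC skTop1.
- by apply: Or32; rewrite ek mulnC skTop2.
- by apply: Or33; rewrite ek mulnC skTop3.
Qed.

Lemma Sgen_Top (R : realType) (w : nat -> R) :
  Sgen w collatz (fun k => (2 * k).+1) =
  maxe (maxe (sup_m1 (seq1 w)) (sup_m1 (seq2 w))) (sup_m1 (seq3 w)).
Proof.
apply/eqP; rewrite eq_le; apply/andP; split.
- apply: ge_ereal_sup => _ [k k3 <-].
  have [m m1 [e|e|e]] := sk_cases w k3; rewrite e !le_max.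
  + by apply/orP; left; apply/orP; left; apply: ereal_sup_ubound; exists m.
  + by apply/orP; left; apply/orP; right; apply: ereal_sup_ubound; exists m.
  + by apply/orP; right; apply: ereal_sup_ubound; exists m.
- rewrite !ge_max; apply/andP; split; [apply/andP; split|];
    apply: ge_ereal_sup => _ [m /= m1 <-]; apply: ereal_sup_ubound.
  + by exists (3 * m)%N; [rewrite /=; lia | rewrite skTop1].
  + by exists (3 * m + 1)%N; [rewrite /=; lia | rewrite skTop2].
  + by exists (3 * m + 2)%N; [rewrite /=; lia | rewrite skTop3].
Qed.

Lemma Top_bounded (R : realType) (w : nat -> R) : (forall n, 0 < w n) ->
  (bounded_op w (@Top R) <->
     [/\ bounded_seq1 (seq1 w), bounded_seq1 (seq2 w) & bounded_seq1 (seq3 w)]).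
Proof.
move=> wp.
rewrite (@gen_bounded R w (@Top R) collatz (fun k => (2 * k).+1) wp Hf_Top (fun c _ => erefl)).
split.
- move=> [B HB]; split; exists B => m m1.
  + by rewrite -skTop1 // ger0_norm ?sk_ge0 //; apply: HB; lia.
  + by rewrite -skTop2 // ger0_norm ?sk_ge0 //; apply: HB; lia.
  + by rewrite -skTop3 // ger0_norm ?sk_ge0 //; apply: HB; lia.
- move=> [[B1 H1] [B2 H2] [B3 H3]]; exists (Num.max B1 (Num.max B2 B3)) => k k3.
  have [m m1 [e|e|e]] := sk_cases w k3; rewrite e; apply: le_trans (ler_norm _) _.
  + by apply: le_trans (H1 m m1) _; rewrite !le_max lexx.
  + by apply: le_trans (H2 m m1) _; rewrite !le_max lexx ?orbT.
  + by apply: le_trans (H3 m m1) _; rewrite !le_max lexx ?orbT.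
Qed.

Lemma omega0_pos (R : realType) n : 0 < @omega0 R n.
Proof. by rewrite /omega0 divr_gt0 // pi_gt0. Qed.

Lemma pidiv (R : realType) (a b : R) : (a / pi) / (b / pi) = a / b.
Proof.
have p0 : (0:R) < pi := pi_gt0 R.
by rewrite invf_div mulrA divfK // gt_eqF.
Qed.

Lemma natL (R : realType) (a m b : nat) : ((a * m + b).+1)%:R = a%:R * m%:R + (b%:R + 1) :> R.
Proof. by rewrite -addn1 -addnA !natrD natrM. Qed.

Lemma natL0 (R : realType) (a m : nat) : ((a * m).+1)%:R = a%:R * m%:R + 1 :> R.
Proof. by rewrite -addn1 !natrD natrM. Qed.

Lemma natS (R : realType) (n : nat) : (n.+1)%:R = n%:R + 1 :> R.
Proof. by rewrite -addn1 natrD. Qed.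

Lemma om_seq1 (R : realType) m : 0 <= seq1 (@omega0 R) m <= 8 / 3.
Proof.
rewrite /seq1 /omega0 pidiv !natL0.
have x0 : (0 : R) <= m%:R by [].
apply/andP; split; first by apply: divr_ge0; lra.
rewrite ler_pdivrMr; lra.
Qed.

Lemma om_seq2 (R : realType) m : 0 <= seq2 (@omega0 R) m <= 8 / 3.
Proof.
rewrite /seq2 /omega0 pidiv !natL.
have x0 : (0 : R) <= m%:R by [].
apply/andP; split; first by apply: divr_ge0; lra.
rewrite ler_pdivrMr; lra.
Qed.

Lemma om_seq3 (R : realType) m : seq3 (@omega0 R) m = 8 / 3 - 1 / (3 * m%:R + 3).
Proof.
rewrite /seq3 /omega0 -mulrDl pidiv !natL.
have x0 : (0 : R) <= m%:R by [].
field; apply: lt0r_neq0; lra.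
Qed.

Lemma om_sup1 (R : realType) : (sup_m1 (seq1 (@omega0 R)) <= (8 / 3 : R)%:E)%E.
Proof. by apply: ge_ereal_sup => _ [m _ <-]; rewrite lee_fin; case/andP: (om_seq1 R m). Qed.

Lemma om_sup2 (R : realType) : (sup_m1 (seq2 (@omega0 R)) <= (8 / 3 : R)%:E)%E.
Proof. by apply: ge_ereal_sup => _ [m _ <-]; rewrite lee_fin; case/andP: (om_seq2 R m). Qed.

Lemma om_sup3 (R : realType) : sup_m1 (seq3 (@omega0 R)) = (8 / 3 : R)%:E.
Proof.
apply/eqP; rewrite eq_le; apply/andP; split.
  apply: ge_ereal_sup => _ [m _ <-]; rewrite lee_fin om_seq3.
  have x0 : (0 : R) <= m%:R by [].
  rewrite lerBlDr lerDl; apply: divr_ge0; lra.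
apply/lee_addgt0Pr => e e0.
have ie0 : 0 <= e^-1 by rewrite invr_ge0 ltW.
have hb := archi_boundP ie0.
set b := Num.Def.archi_bound e^-1 in hb.
have hs : ((seq3 (@omega0 R) b.+1)%:E <= sup_m1 (seq3 (@omega0 R)))%E.
  by apply: ereal_sup_ubound; exists b.+1.
apply: le_trans (leeD2r _ hs); rewrite -EFinD lee_fin om_seq3.
have bx : (0 : R) <= b%:R by [].
rewrite (natS R b).
have ee : e^-1 * e = 1 by rewrite mulVf // gt_eqF.
have hbe : 1 < b%:R * e by nra.
have h1 : 1 / (3 * (b%:R + 1) + 3) <= e.
  rewrite ler_pdivrMr; last lra.
  nra.
lra.
Qed.

Theorem proposition2p1 (R : realType) (w : nat -> R) (w_pos : forall n, 0 < w n) :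
  (bounded_op w (@Top R) <->
     [/\ bounded_seq1 (seq1 w), bounded_seq1 (seq2 w) & bounded_seq1 (seq3 w)]) /\
  (bounded_op w (@Top R) ->
     opnormsq w (@Top R) =
       maxe (maxe (sup_m1 (seq1 w)) (sup_m1 (seq2 w))) (sup_m1 (seq3 w)) /\
     forall n : nat, opnormsq w (iter n (@Top R)) = iter_sup w n) /\
  (bounded_op (@omega0 R) (@Top R) /\
   opnormsq (@omega0 R) (@Top R) = (8 / 3 : R)%:E).
Proof.
have opTop : forall (w' : nat -> R), (forall n, 0 < w' n) ->
    opnormsq w' (@Top R) =
      maxe (maxe (sup_m1 (seq1 w')) (sup_m1 (seq2 w'))) (sup_m1 (seq3 w')).
  move=> w' wp'.
  rewrite (@gen_opnorm R w' (@Top R) collatz (fun k => (2 * k).+1) wp' Hf_Top (fun c _ => erefl)).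
  exact: Sgen_Top.
split; first exact: Top_bounded.
split.
  move=> _; split; first exact: opTop.
  move=> n.
  rewrite (@gen_opnorm R w (iter n (@Top R)) (iter n collatz) (fun k => (2 ^ n * k).+1)
     w_pos (@Hf_iter n) (fun c cX => @iter_Top R n c (proj1 cX))).
  by [].
have wp0 : forall n, 0 < @omega0 R n by move=> n; exact: omega0_pos.
split.
  apply/(Top_bounded wp0); split; exists (8 / 3) => m _.
  + by case/andP: (om_seq1 R m) => h0 h1; rewrite ger0_norm.
  + by case/andP: (om_seq2 R m) => h0 h1; rewrite ger0_norm.
  + rewrite om_seq3 ger0_norm.
      have x0 : (0 : R) <= m%:R by [].
      by rewrite lerBlDr lerDl; apply: divr_ge0; lra.
    have x0 : (0 : R) <= m%:R by [].
    rewrite subr_ge0 ler_pdivrMr; last lra.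
    lra.
rewrite opTop // om_sup3.
apply/eqP; rewrite eq_le; apply/andP; split.
  by rewrite !ge_max om_sup1 om_sup2 lexx.
by rewrite !le_max lexx orbT.
Qed.
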